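(* In the setting of the context, let $z^\odot\in\overline{\mathbb{U}}$ be such that the stable root $\kappa_s$ extends continuously to $z^\odot$ with value $\kappa_s(z^\odot)$, and suppose $\lim_{z\to z^\odot,\,z\in\mathbb{U}}\langle KL\rangle(z)=0$. Then $(z^\odot,\kappa_s(z^\odot))$ is a shared eigenvalue between bulk and boundary scheme, i.e. $\det\big(z^\odot I_q-\sum_{\ell=0}^{w}B_{0,\ell}\kappa_s(z^\odot)^\ell\big)=0$ (in addition to $\kappa_s(z^\odot)$ being a root of the bulk characteristic equation at $z^\odot$).
   Context: Notation: $\mathbb{D}=\{|z|<1\}$, $\mathbb{U}=\{|z|>1\}$, $\overline{\mathbb{U}}=\{|z|\geq1\}$; $e_i$ canonical basis vectors. Data: $q\geq2$, pairwise distinct velocities $c_i\in\mathbb{Z}$ with $\max_ic_i=1$ and $\pi$ the unique index with $c_\pi=1$; invertible $M\in\mathbb{R}^{q\times q}$; $s_1\in\mathbb{R}$, $s_2,\dots,s_q\in(0,2]$; $\epsilon\in\mathbb{R}^q$, $\epsilon_1=1$; $K:=I_q+\mathrm{diag}(s_1,\dots,s_q)(\epsilon e_1^{\mathsf T}-I_q)$; $\hat E(\kappa):=M\mathrm{diag}(\kappa^{-c_1},\dots,\kappa^{-c_q})M^{-1}K$. The scheme is von Neumann stable ($\mathrm{sp}\hat E(e^{i\vartheta})\subset\{|z|\le1\}$ for all real $\vartheta$), and $\det(zI_q-\hat E(\kappa))=d_{-1}(z)\kappa^{-1}+\sum_{\ell=0}^{\bar p}d_\ell(z)\kappa^\ell$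 with $d_{-1}\not\equiv0$. For $z\in\mathbb{U}$, $\kappa_s(z)\in\mathbb{D}$ is the stable root of $\det(zI_q-\hat E(\kappa))=0$, and $\varphi_s(z)$ spans $\ker(zI_q-\hat E(\kappa_s(z)))$, normalized so that its first component equals $1$. Kinetic boundary condition at the ghost point: $f^{n\star}_{\pi,-1}=\sum_{\ell=1}^q\sum_{h=0}^{w}b_{\pi,\ell,1,h}f^{n\star}_{\ell,h}+g^n_{\pi,-1}$ (distribution functions $f=M^{-1}m$), giving boundary matrices $B_{0,\ell}:=M\big(\sum_{i:\,c_i=-\ell}e_ie_i^{\mathsf T}+e_\pi\sum_{h=1}^qb_{\pi,h,1,\ell}e_h^{\mathsf T}\big)M^{-1}K$, $\ell=0,\dots,w$. The Kreiss–Lopatinskii scalar product is $\langle KL\rangle(z):=\big(e_\pi^{\mathsf T}\kappa_s(z)^{-1}-\sum_{\ell=0}^{w}\sum_{h=1}^qe_h^{\mathsf T}b_{\pi,h,1,\ell}\kappa_s(z)^\ell\big)M^{-1}K\varphi_s(z)$. *)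

(* Defs.v *)
From HB Require Import structures.
From mathcomp Require Import all_boot all_order all_algebra.
From mathcomp Require Import all_classical all_reals all_analysis.
From mathcomp Require Import complex.

Set Implicit Arguments.
Unset Strict Implicit.
Unset Printing Implicit Defensive.

Import Order.TTheory GRing.Theory Num.Theory.
Import numFieldTopology.Exports numFieldNormedType.Exports.

Local Open Scope ring_scope.
Local Open Scope complex_scope.

(* Topology on the complex numbers R[i]: the metric induced by the complex
   modulus (the standard topology of C), obtained as for any numFieldType. *)
#[non_forgetful_inheritance]
HB.instance Definition _ (R : rcfType) :=
  PseudoPointedMetric.copy (R[i]) (R[i])^o.

(* Conventions: the paper's indices 1..q are the ordinals 0..q-1 of 'I_q;
   the paper's index 1 is ord0 (q = n.+2 >= 2). All data (M, s, epsilon, b)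
   are real; the matrices are embedded into complex matrices over R[i]. *)

Section LBM.
Variable R : realType.
Variable n : nat.
Local Notation q := n.+2.
Local Notation C := (R[i]).

Definition cmx (m p : nat) (A : 'M[R]_(m, p)) : 'M[C]_(m, p) :=
  map_mx (fun x : R => x%:C) A.

Definition evec (i : 'I_q) : 'cV[R]_q := delta_mx i 0.

Definition Kmat (s eps : 'I_q -> R) : 'M[R]_q :=
  1%:M + diag_mx (\row_i s i) *m ((\col_i eps i) *m (evec ord0)^T - 1%:M).

(* \hat E(kappa) := M diag(kappa^{-c_1},...,kappa^{-c_q}) M^{-1} K
   (meaningful for kappa <> 0) *)
Definition Ehat (c : 'I_q -> int) (M : 'M[R]_q) (s eps : 'I_q -> R) (kappa : C)
  : 'M[C]_q :=
  cmx M *m diag_mx (\row_i (kappa ^ (- c i))) *m cmx (invmx M)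
    *m cmx (Kmat s eps).

(* B_{0,l} := M ( sum_{i : c_i = -l} e_i e_i^T
                  + e_pi sum_{h=1}^q b_{pi,h,1,l} e_h^T ) M^{-1} K,
   where b h l stands for b_{pi,h,1,l}. *)
Definition B0 (c : 'I_q -> int) (M : 'M[R]_q) (s eps : 'I_q -> R)
  (pi : 'I_q) (b : 'I_q -> nat -> R) (l : nat) : 'M[R]_q :=
  M *m (\sum_(i < q | c i == - (l%:Z)) evec i *m (evec i)^T
        + evec pi *m (\sum_(h < q) b h l *: (evec h)^T))
    *m invmx M *m Kmat s eps.

Definition Bsum (c : 'I_q -> int) (M : 'M[R]_q) (s eps : 'I_q -> R)
  (pi : 'I_q) (b : 'I_q -> nat -> R) (w : nat) (kappa : C) : 'M[C]_q :=
  \sum_(l < w.+1) kappa ^+ l *: cmx (B0 c M s eps pi b l).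

Definition KL (M : 'M[R]_q) (s eps : 'I_q -> R) (pi : 'I_q)
  (b : 'I_q -> nat -> R) (w : nat) (kappa : C) (phi : 'cV[C]_q) : C :=
  (((kappa^-1 *: (cmx (evec pi))^T
     - \sum_(l < w.+1) \sum_(h < q) ((b h l)%:C * kappa ^+ l) *: (cmx (evec h))^T)
    *m cmx (invmx M) *m cmx (Kmat s eps) *m phi) 0 0).

Definition expi (theta : R) : C := cos theta +i* sin theta.

End LBM.

(* Main.v *)
Require Import Defs.
From HB Require Import structures.
From mathcomp Require Import all_boot all_order all_algebra.
From mathcomp Require Import all_classical all_reals all_analysis.
From mathcomp Require Import complex.
From mathcomp Require Import ring lra zify.
Import Order.TTheory GRing.Theory Num.Theory.
Import numFieldTopology.Exports numFieldNormedType.Exports.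
Local Open Scope ring_scope.
Local Open Scope classical_set_scope.

Lemma properU (R : realType) (z0 : R[i]) : 1 <= `|z0| ->
  ProperFilter (within [set z : R[i] | 1 < `|z| /\ z != z0] (nbhs z0)).
Proof.
move=> hz0; constructor; last exact: within_filter.
rewrite /within => /=.
move=> /(@nbhs_normP _ (R[i]^o)) [e /= e0 he].
have z0n : z0 != 0 by apply: contraTneq hz0 => ->; rewrite normr0 ler10.
have nz0 : 0 < `|z0| by rewrite normr_gt0.
set t := e / (2 * `|z0|).
have t0 : 0 < t by rewrite divr_gt0 // mulr_gt0.
apply: (he (z0 + z0 * t)).
- rewrite /= opprD addrA subrr sub0r normrN normrM (gtr0_norm t0) /t.
  have -> : `|z0| * (e / (2 * `|z0|)) = e / 2 by field; rewrite lt0r_neq0.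
  by rewrite ltr_pdivrMr // ltr_pMr // ltr1n.
- split.
  + rewrite -{1}(mulr1 z0) -mulrDr normrM (gtr0_norm (_ : 0 < 1 + t)); last first.
      by rewrite addr_gt0.
    apply: le_lt_trans hz0 _. by rewrite ltr_pMr // ltrDl.
  + by rewrite -subr_eq0 addrAC subrr add0r mulf_eq0 negb_or z0n /= lt0r_neq0.
Qed.

Section Cvg.
Context {R : realType}.
Local Notation C := R[i].
Context {T : Type}.
Context {F : set_system T}.
Context {FF : Filter F}.

Lemma cM (f g : T -> C) (a b : C) : f @ F --> a -> g @ F --> b -> (fun x => f x * g x) @ F --> a * b.
Proof. move=> fa gb; exact: (@cvgM R[i] T F FF f g a b fa gb). Qed.
Lemma cD (f g : T -> C) (a b : C) : f @ F --> a -> g @ F --> b -> (fun x => f x + g x) @ F --> a + b.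
Proof. move=> fa gb; exact: (@cvgD R[i] (R[i]^o) T F FF f g a b fa gb). Qed.
Lemma cN (f : T -> C) (a : C) : f @ F --> a -> (fun x => - f x) @ F --> - a.
Proof. move=> fa; exact: (@cvgN R[i] (R[i]^o) T F FF f a fa). Qed.
Lemma cC (a : C) : (fun x : T => a) @ F --> a.
Proof. exact: cvg_cst. Qed.

Lemma csum (I : Type) (r : seq I) (P : pred I) (f : I -> T -> C) (a : I -> C) :
  (forall i, P i -> f i @ F --> a i) ->
  (fun x => \sum_(i <- r | P i) f i x) @ F --> \sum_(i <- r | P i) a i.
Proof.
move=> h; elim: r => [|j r IH].
  rewrite big_nil; have -> : (fun x => \sum_(i <- [::] | P i) f i x) = (fun=> 0).
    by apply: funext => x; rewrite big_nil.
  exact: cC.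
have -> : (fun x => \sum_(i <- j :: r | P i) f i x) = (fun x => if P j then f j x + \sum_(i <- r | P i) f i x else \sum_(i <- r | P i) f i x).
  by apply: funext => x; rewrite big_cons.
rewrite big_cons; case Pj: (P j); [exact: (cD _ _ _ _ (h j Pj) IH)|exact: IH].
Qed.

Lemma cprod (I : Type) (r : seq I) (P : pred I) (f : I -> T -> C) (a : I -> C) :
  (forall i, P i -> f i @ F --> a i) ->
  (fun x => \prod_(i <- r | P i) f i x) @ F --> \prod_(i <- r | P i) a i.
Proof.
move=> h; elim: r => [|j r IH].
  rewrite big_nil; have -> : (fun x => \prod_(i <- [::] | P i) f i x) = (fun=> 1).
    by apply: funext => x; rewrite big_nil.
  exact: cC.
have -> : (fun x => \prod_(i <- j :: r | P i) f i x) = (fun x => if P j then f j x * \prod_(i <- r | P i) f i x else \prod_(i <- r | P i) f i x).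
  by apply: funext => x; rewrite big_cons.
rewrite big_cons; case Pj: (P j); [exact: (cM _ _ _ _ (h j Pj) IH)|exact: IH].
Qed.

Lemma cX (f : T -> C) (a : C) k : f @ F --> a -> (fun x => f x ^+ k) @ F --> a ^+ k.
Proof.
move=> h; elim: k => [|k IH].
  rewrite expr0; have -> : (fun x => f x ^+ 0) = (fun=> 1) by apply: funext => x; rewrite expr0.
  exact: cC.
have -> : (fun x => f x ^+ k.+1) = (fun x => f x * f x ^+ k) by apply: funext => x; rewrite exprS.
rewrite exprS; exact: (cM _ _ _ _ h IH).
Qed.

Definition mcvg (m p : nat) (A : T -> 'M[C]_(m, p)) (A0 : 'M[C]_(m, p)) :=
  forall i j, (fun x => A x i j) @ F --> A0 i j.
Arguments mcvg {m p}.

Lemma mC m p (A0 : 'M[C]_(m,p)) : mcvg (fun _ => A0) A0.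
Proof. by move=> i j; exact: cC. Qed.

Lemma mD m p (A B : T -> 'M[C]_(m,p)) A0 B0 : mcvg A A0 -> mcvg B B0 ->
  mcvg (fun x => A x + B x) (A0 + B0).
Proof.
move=> ha hb i j; under eq_fun do rewrite mxE; rewrite mxE; exact: cD.
Qed.

Lemma mN m p (A : T -> 'M[C]_(m,p)) A0 : mcvg A A0 -> mcvg (fun x => - A x) (- A0).
Proof.
move=> ha i j; under eq_fun do rewrite mxE; rewrite mxE; exact: cN.
Qed.

Lemma mZ m p (f : T -> C) (a : C) (A : T -> 'M[C]_(m,p)) A0 : f @ F --> a -> mcvg A A0 ->
  mcvg (fun x => f x *: A x) (a *: A0).
Proof.
move=> hf ha i j; under eq_fun do rewrite mxE; rewrite mxE; exact: (cM _ _ _ _ hf (ha i j)).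
Qed.

Lemma cext (f g : T -> C) (a : C) : (forall x, f x = g x) -> g @ F --> a -> f @ F --> a.
Proof. by move=> e; have -> : f = g by apply: funext. Qed.

Lemma mS m (f : T -> C) (a : C) : f @ F --> a -> mcvg (fun x => ((f x)%:M : 'M[C]_m)) (a%:M).
Proof.
move=> hf i j; apply: (@cext _ (fun x => f x *+ (i == j))) => [x|]; first by rewrite mxE.
rewrite mxE; case: (i == j).
  by rewrite mulr1n; apply: (@cext _ f) => [x|]; [rewrite mulr1n|exact: hf].
by rewrite mulr0n; apply: (@cext _ (fun=> 0)) => [x|]; [rewrite mulr0n|exact: cC].
Qed.

Lemma mM m p r (A : T -> 'M[C]_(m,p)) (B : T -> 'M[C]_(p,r)) A0 B0 : mcvg A A0 -> mcvg B B0 ->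
  mcvg (fun x => A x *m B x) (A0 *m B0).
Proof.
move=> ha hb i j; under eq_fun do rewrite mxE; rewrite mxE.
by apply: csum => k _; exact: (cM _ _ _ _ (ha i k) (hb k j)).
Qed.

Lemma msum m p (I : Type) (r : seq I) (P : pred I) (A : I -> T -> 'M[C]_(m,p)) A0 :
  (forall i, P i -> mcvg (A i) (A0 i)) ->
  mcvg (fun x => \sum_(i <- r | P i) A i x) (\sum_(i <- r | P i) A0 i).
Proof.
move=> h i j; under eq_fun do rewrite summxE; rewrite summxE.
by apply: csum => k Pk; apply: h.
Qed.

Lemma mdet m (A : T -> 'M[C]_m) A0 : mcvg A A0 -> (fun x => \det (A x)) @ F --> \det A0.
Proof.
move=> h; rewrite /determinant; under eq_fun do rewrite /determinant.
apply: csum => s _; apply: (cM _ _ _ _ (cC _)).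
by apply: cprod => i _; apply: h.
Qed.

Lemma madj m (A : T -> 'M[C]_m) A0 : mcvg A A0 -> mcvg (fun x => \adj (A x)) (\adj A0).
Proof.
move=> h i j; under eq_fun do rewrite mxE; rewrite mxE /cofactor.
apply: (cM _ _ _ _ (cC _)).
case: m A A0 h i j => [|m] A A0 h i j; first by case: i.
apply: mdet => k l; under eq_fun do rewrite !mxE; rewrite !mxE; exact: h.
Qed.

End Cvg.

Local Open Scope complex_scope.
Section Alg.
Context {R : realType} {n : nat}.
Local Notation q := n.+2.
Local Notation C := R[i].

Lemma cmxE m p (A : 'M[R]_(m,p)) : cmx A = map_mx (real_complex R) A.
Proof. by []. Qed.

Lemma evecE (k : 'I_q) : evec R k *m (evec R k)^T = delta_mx k k.
Proof. by rewrite /evec trmx_delta mul_delta_mx. Qed.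

Lemma Dsplit (c : 'I_q -> int) (pi : 'I_q) (w : nat) (kappa : C) :
  injective c -> (forall i, c i <= 1) -> c pi = 1 -> (forall i, - c i <= w%:Z) ->
  diag_mx (\row_i (kappa ^ (- c i))) =
  \sum_(l < w.+1) kappa ^+ l *: cmx (\sum_(i < q | c i == - (l%:Z)) evec R i *m (evec R i)^T)
  + kappa^-1 *: cmx (evec R pi *m (evec R pi)^T).
Proof.
move=> cinj cle cpi cw.
rewrite evecE; under eq_bigr => l _ do under eq_bigr => k _ do rewrite evecE.
apply/matrixP => i j; rewrite !mxE summxE.
under eq_bigr do rewrite !mxE summxE.
under eq_bigr do under eq_bigr do rewrite mxE.
have c0 : (0:R)%:C = 0 :> C by [].
have cb (bb : bool) : ((bb%:R : R))%:C = bb%:R :> C by case: bb.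
rewrite cb.
have [<-|nij] := eqVneq i j; last first.
  rewrite mulr0n big1 ?add0r; last first.
    move=> l _; rewrite big1 ?c0 ?mulr0 // => k _.
    by case: (eqVneq i k) => [ik|] //=; rewrite -ik eq_sym (negPf nij).
  by case: (eqVneq i pi) => [ip|] /=; rewrite ?mulr0 // -ip eq_sym (negPf nij) mulr0.
rewrite /= mulr1n andbb.
under eq_bigr do under eq_bigr do rewrite andbb.
have [->|nip] := eqVneq i pi.
  rewrite [true%:R]/(1:C) mulr1 big1 ?add0r; last first.
    move=> l _; rewrite big1 ?c0 ?mulr0 // => k /eqP ck.
    case: (eqVneq pi k) => [pk|] /=; last by [].
    by move: ck; rewrite -pk cpi; lia.
  by rewrite cpi.
rewrite [false%:R]/(0:C) mulr0 addr0.
have ci0 : c i <= 0.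
  have := cle i; rewrite le_eqVlt => /orP [/eqP ci1|]; last by rewrite -ltzD1.
  by move: nip; rewrite -cpi in ci1; rewrite (cinj _ _ ci1) eqxx.
have l0w : (`|c i|%N < w.+1)%N.
  by have := cw i; lia.
rewrite (bigD1 (Ordinal l0w)) //=.
rewrite [X in _ + X]big1 ?addr0; last first.
  move=> l nl; rewrite big1 ?c0 ?mulr0 // => k /eqP ck.
  case: (eqVneq i k) => [ik|] /=; last by [].
  exfalso; move: nl; rewrite -ik in ck.
  apply/negP; rewrite negbK; apply/eqP; apply: val_inj => /=.
  by apply/eqP; lia.
rewrite (bigD1 i) /=; last by apply/eqP; lia.
rewrite big1 ?addr0; last first.
  by move=> k /andP [_ ki]; rewrite eq_sym (negPf ki).
rewrite eqxx cb [true%:R]/(1:C) mulr1.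
have -> : - c i = (`|c i|%N)%:Z by lia.
by [].
Qed.

Lemma cmx_sum m p (I : Type) (r : seq I) (P : pred I) (F : I -> 'M[R]_(m,p)) :
  cmx (\sum_(i <- r | P i) F i) = \sum_(i <- r | P i) cmx (F i).
Proof.
elim: r => [|j r IH]; first by rewrite !big_nil cmxE map_mx0.
by rewrite !big_cons; case: (P j); rewrite ?cmxE ?map_mxD -?cmxE IH.
Qed.

Lemma keyv (c : 'I_q -> int) (M : 'M[R]_q) (s eps : 'I_q -> R) (pi : 'I_q)
  (b : 'I_q -> nat -> R) (w : nat) (kappa z : C) (phi : 'cV[C]_q) :
  injective c -> (forall i, c i <= 1) -> c pi = 1 -> (forall i, - c i <= w%:Z) ->
  (z%:M - Ehat c M s eps kappa) *m phi = 0 ->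
  (z%:M - Bsum c M s eps pi b w kappa) *m phi
    = KL M s eps pi b w kappa phi *: (cmx M *m cmx (evec R pi)).
Proof.
move=> cinj cle cpi cw hphi.
set Mc := cmx M; set Mi := cmx (invmx M); set Kc := cmx (Kmat s eps).
set ep := cmx (evec R pi).
set rl := fun l : nat => \sum_(h < q) b h l *: (evec R h)^T.
set Sl := fun l : nat => \sum_(i < q | c i == - (l%:Z)) evec R i *m (evec R i)^T.
set rv := kappa^-1 *: (cmx (evec R pi))^T
     - \sum_(l < w.+1) \sum_(h < q) ((b h l)%:C * kappa ^+ l) *: (cmx (evec R h))^T.
set D := diag_mx (\row_i (kappa ^ (- c i))).
set Sig := \sum_(l < w.+1) kappa ^+ l *: (cmx (Sl l) + ep *m cmx (rl l)).
have hB : Bsum c M s eps pi b w kappa = Mc *m Sig *m Mi *m Kc.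
  rewrite /Bsum /Sig mulmx_sumr !mulmx_suml; apply: eq_bigr => l _.
  rewrite /B0 /Mc /Mi /Kc /ep /Sl /rl !cmxE !map_mxM map_mxD map_mxM.
  by rewrite -scalemxAr !scalemxAl.
have hE : Ehat c M s eps kappa = Mc *m D *m Mi *m Kc by [].
have hD : D - Sig = ep *m rv.
  have -> : Sig = \sum_(l < w.+1) kappa ^+ l *: cmx (Sl l)
      + \sum_(l < w.+1) kappa ^+ l *: (ep *m cmx (rl l)).
    by rewrite /Sig -big_split; apply: eq_bigr => l _; rewrite scalerDr.
  rewrite /D (@Dsplit c pi w kappa cinj cle cpi cw) -/(Sl _).
  have sub3 : forall A B Q : 'M[C]_q, A + B - (A + Q) = B - Q.
    by move=> A B Q; rewrite opprD addrACA subrr add0r.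
  rewrite sub3 /rv mulmxBr -scalemxAr /ep cmxE map_mxM map_trmx -!cmxE.
  congr (_ - _).
  rewrite mulmx_sumr; apply: eq_bigr => l _.
  rewrite /rl cmx_sum !mulmx_sumr scaler_sumr; apply: eq_bigr => h _.
  rewrite [cmx (_ *: _)]cmxE map_mxZ -map_trmx -!cmxE /=.
  by rewrite -!scalemxAr scalerA mulrC.
have hz : z *: phi = Mc *m D *m Mi *m Kc *m phi.
  by apply/eqP; rewrite -subr_eq0 -hE -mul_scalar_mx -mulmxBl hphi.
rewrite mulmxBl mul_scalar_mx hz hB -!mulmxBl -mulmxBr hD.
rewrite /KL -/Mi -/Kc -/rv.
rewrite -mul_mx_scalar -mx11_scalar !mulmxA.
by [].
Qed.

Lemma keydet (c : 'I_q -> int) (M : 'M[R]_q) (s eps : 'I_q -> R) (pi : 'I_q)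
  (b : 'I_q -> nat -> R) (w : nat) (kappa z : C) (phi : 'cV[C]_q) :
  injective c -> (forall i, c i <= 1) -> c pi = 1 -> (forall i, - c i <= w%:Z) ->
  (z%:M - Ehat c M s eps kappa) *m phi = 0 -> phi ord0 0 = 1 ->
  \det (z%:M - Bsum c M s eps pi b w kappa)
    = KL M s eps pi b w kappa phi *
      ((\adj (z%:M - Bsum c M s eps pi b w kappa) *m (cmx M *m cmx (evec R pi))) ord0 0).
Proof.
move=> cinj cle cpi cw hphi p1.
have := congr1 (mulmx (\adj (z%:M - Bsum c M s eps pi b w kappa)))
  (@keyv c M s eps pi b w kappa z phi cinj cle cpi cw hphi).
rewrite mulmxA mul_adj_mx mul_scalar_mx -scalemxAr => /(congr1 (fun X : 'cV[C]_q => X ord0 0)).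
by rewrite !mxE p1 mulr1.
Qed.
End Alg.
Local Close Scope complex_scope.

Lemma chorner {R : realType} {T : Type} {F : set_system T} {FF : Filter F}
  (p : {poly R[i]}) (f : T -> R[i]) (a : R[i]) :
  f @ F --> a -> (fun x => p.[f x]) @ F --> p.[a].
Proof.
move=> h; apply: (cext _ (fun x => \sum_(i < size p) p`_i * f x ^+ i) _ (fun x => horner_coef _ _)).
rewrite horner_coef; apply: csum => j _; exact: (cM _ _ _ _ (cC _) (cX _ _ _ h)).
Qed.

Lemma cvgU' {R : realType} {T : Type} {F : set_system T} {FF : ProperFilter F}
  {f : T -> R[i]} {a b : R[i]} : f @ F --> a -> f @ F --> b -> a = b.
Proof.
move=> fa fb; have H : hausdorff_space R[i] := @norm_hausdorff _ (R[i]^o).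
exact: (cvg_unique H fa fb).
Qed.

Lemma ev_eq {R : realType} (U : set R[i]) (z0 : R[i]) (f g : R[i] -> R[i]) (a : R[i]) :
  (forall z, U z -> f z = g z) -> g @ within U (nbhs z0) --> a ->
  f @ within U (nbhs z0) --> a.
Proof.
move=> e h.
have E : \forall x \near within U (nbhs z0), g x = f x.
  by apply: filterS (withinT U _) => z Uz; rewrite e.
exact: (cvg_trans (near_eq_cvg E) h).
Qed.

Theorem mainTheorem5 (R : realType) (n : nat)
  (c : 'I_n.+2 -> int) (pi : 'I_n.+2) (M : 'M[R]_n.+2)
  (s eps : 'I_n.+2 -> R) (b : 'I_n.+2 -> nat -> R) (w : nat)
  (dm1 : {poly R[i]}) (d : nat -> {poly R[i]}) (pbar : nat)
  (kappa_s : R[i] -> R[i]) (phi_s : R[i] -> 'cV[R[i]]_n.+2)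
  (z0 kappa0 : R[i]) :
  (* velocities: pairwise distinct integers with max 1, attained at pi *)
  injective c ->
  (forall i, c i <= 1) ->
  c pi = 1 ->
  (* the boundary stencil w covers the bulk stencil *)
  (forall i, - c i <= w%:Z) ->
  M \in unitmx ->
  (forall i, i != ord0 -> 0 < s i <= 2) ->
  eps ord0 = 1 ->
  (* von Neumann stability *)
  (forall (theta : R) (lambda : R[i]),
      eigenvalue (Ehat c M s eps (expi theta)) lambda -> `|lambda| <= 1) ->
  (* structure of the bulk characteristic polynomial *)
  dm1 != 0 ->
  (forall z kappa : R[i], kappa != 0 ->
     \det (z%:M - Ehat c M s eps kappa)
       = dm1.[z] * kappa^-1 + \sum_(l < pbar.+1) (d l).[z] * kappa ^+ l) ->
  (* kappa_s z is the stable root for z in U *)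
  (forall z : R[i], 1 < `|z| ->
     [/\ kappa_s z != 0, `|kappa_s z| < 1 &
         \det (z%:M - Ehat c M s eps (kappa_s z)) = 0]) ->
  (* phi_s z spans the kernel and is normalized by its first component *)
  (forall z : R[i], 1 < `|z| ->
     [/\ (z%:M - Ehat c M s eps (kappa_s z)) *m phi_s z = 0,
         phi_s z ord0 0 = 1 &
         forall v : 'cV[R[i]]_n.+2,
           (z%:M - Ehat c M s eps (kappa_s z)) *m v = 0 ->
           exists a : R[i], v = a *: phi_s z]) ->
  (* z0 in closed U, kappa_s extends continuously to z0 with value kappa0 *)
  1 <= `|z0| ->
  kappa_s @ within [set z : R[i] | 1 < `|z|] (nbhs z0) --> kappa0 ->
  (* the Kreiss--Lopatinskii scalar product tends to 0 at z0 *)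
  (fun z => KL M s eps pi b w (kappa_s z) (phi_s z))
     @ within [set z : R[i] | 1 < `|z| /\ z != z0] (nbhs z0) --> (0 : R[i]) ->
  (* conclusion: kappa0 is a root of the bulk characteristic equation at z0
     (in the polynomial form kappa * det(z I - \hat E(kappa)) = 0) and
     (z0, kappa0) is an eigenvalue of the boundary scheme *)
  dm1.[z0] + \sum_(l < pbar.+1) (d l).[z0] * kappa0 ^+ l.+1 = 0
  /\ \det (z0%:M - Bsum c M s eps pi b w kappa0) = 0.
Proof.
move=> cinj cle cpi cw Mu sp e0 vn dm1n hdet hks hphi hz0 hk hKL.
set U := [set z : R[i] | 1 < `|z| /\ z != z0].
have FP := @properU R z0 hz0.
have kF : kappa_s @ within U (nbhs z0) --> kappa0.
  by move=> P /hk; apply: within_subset => // z [].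
have zF : (fun z : R[i] => z) @ within U (nbhs z0) --> z0 by apply: cvg_within.
split.
  have h1 : (fun z => dm1.[z] + \sum_(l < pbar.+1) (d l).[z] * kappa_s z ^+ l.+1)
      @ within U (nbhs z0) --> dm1.[z0] + \sum_(l < pbar.+1) (d l).[z0] * kappa0 ^+ l.+1.
    have hs : (fun z => \sum_(l < pbar.+1) (d l).[z] * kappa_s z ^+ l.+1)
        @ within U (nbhs z0) --> \sum_(l < pbar.+1) (d l).[z0] * kappa0 ^+ l.+1.
      apply: csum => l _.
      exact: (cM _ _ _ _ (chorner (d l) _ _ zF) (cX _ _ _ kF)).
    exact: (cD _ _ _ _ (chorner dm1 _ _ zF) hs).
  have h2 : (fun z => dm1.[z] + \sum_(l < pbar.+1) (d l).[z] * kappa_s z ^+ l.+1)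
      @ within U (nbhs z0) --> 0.
    apply: (ev_eq _ _ _ (fun=> 0)); last exact: cC.
    move=> z [Uz _].
    have [k0 _ dz] := hks z Uz.
    have := hdet z (kappa_s z) k0; rewrite dz => /esym E.
    transitivity (kappa_s z * (dm1.[z] * (kappa_s z)^-1
       + \sum_(l < pbar.+1) (d l).[z] * kappa_s z ^+ l)); last by rewrite E mulr0.
    rewrite mulrDr mulr_sumr mulrCA mulfV // mulr1; congr (_ + _).
    by apply: eq_bigr => l _; rewrite exprS mulrCA.
  exact: (cvgU' h1 h2).
have hB : @mcvg R _ (within U (nbhs z0)) n.+2 n.+2 (fun z => Bsum c M s eps pi b w (kappa_s z)) (Bsum c M s eps pi b w kappa0).
  idtac.
  apply: msum => l _.
  exact: (mZ _ _ _ _ _ _ (cX _ _ l kF) (mC _ _ _)).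
have hA : @mcvg R _ (within U (nbhs z0)) n.+2 n.+2
    (fun x => x%:M - Bsum c M s eps pi b w (kappa_s x)) (z0%:M - Bsum c M s eps pi b w kappa0).
  exact: (mD _ _ _ _ _ _ (mS n.+2 _ _ zF) (mN _ _ _ _ hB)).
have hdetc : (fun z => \det (z%:M - Bsum c M s eps pi b w (kappa_s z)))
    @ within U (nbhs z0) --> \det (z0%:M - Bsum c M s eps pi b w kappa0).
  exact: (mdet _ _ _ hA).
have hg : (fun x => (\adj (x%:M - Bsum c M s eps pi b w (kappa_s x)) *m (cmx M *m cmx (evec R pi))) ord0 0)
    @ within U (nbhs z0) --> (\adj (z0%:M - Bsum c M s eps pi b w kappa0) *m (cmx M *m cmx (evec R pi))) ord0 0.
  exact: (mM _ _ _ _ _ _ _ (madj _ _ _ hA) (mC _ _ (cmx M *m cmx (evec R pi))) ord0 0).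
have hprod : (fun z => KL M s eps pi b w (kappa_s z) (phi_s z) *
    (\adj (z%:M - Bsum c M s eps pi b w (kappa_s z)) *m (cmx M *m cmx (evec R pi))) ord0 0)
    @ within U (nbhs z0) --> 0.
  rewrite -(mul0r ((\adj (z0%:M - Bsum c M s eps pi b w kappa0) *m (cmx M *m cmx (evec R pi))) ord0 0)).
  exact: (cM _ _ _ _ hKL hg).
have h0 : (fun z => \det (z%:M - Bsum c M s eps pi b w (kappa_s z)))
    @ within U (nbhs z0) --> 0.
  apply: (ev_eq _ _ _ _ _ _ hprod) => z [Uz _].
  have [e1 e2 _] := hphi z Uz.
  exact: (@keydet R n c M s eps pi b w (kappa_s z) z (phi_s z) cinj cle cpi cw e1 e2).
exact: (cvgU' hdetc h0).
Qed.
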